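(* Let $(A,B)$ be a Katsura pair with $B\in M_N(\{0,1\})$. If the KEP-action $(G_B,E_A)$ is regular, then it is contracting. Moreover, $(G_B,E_A)$ is regular if and only if there is $K\in\mathbb{N}$ such that (i) for $\mu\in E^*_{A,\infty}$, $A_\mu=1$ implies $|\mu|\le K$; and (ii) for $\mu\in E^*_{A,<\infty}$, $|\mu|\ge K$ implies $A_{\mu[K,|\mu|]}=1$.
   Context: Katsura pair: $N\in\mathbb{N}$, $A\in M_N(\mathbb{N})$ (nonnegative integers), $B\in M_N(\mathbb{Z})$ with $A_{ij}=0\Rightarrow B_{ij}=0$. Graph $E_A$: vertices $\{1,\dots,N\}$, edges $e_{i,j,m}$ ($0\le m<A_{ij}$), $r=i$, $s=j$. Finite paths $\mu=\mu_1\cdots\mu_n$ with $s(\mu_i)=r(\mu_{i+1})$, $|\mu|=n$, $\mu[m,n]=\mu_m\cdots\mu_n$. For $\mu=e_{i_0,i_1,r_1}\cdots e_{i_{n-1},i_n,r_n}$, $A_\mu=\prod_tA_{i_ti_{t+1}}$, $B_\mu=\prod_tB_{i_ti_{t+1}}$; $B_e=B_{r(e)s(e)}$. The group bundle $\mathbb{Z}\times E_A^0$ (elements $a_i^k$) acts by $a_i^k\cdot e_{i,j,m}=e_{i,j,\hat m}$, $a_i^k|_{e_{i,j,m}}=a_j^{\hat k}$, $kB_{ij}+m=\hat kA_{ij}+\hat m$, $0\le\hat m<A_{ij}$, extended recursively to paths; $G_B$ is the faithful quotient, $(G_B,E_A)$ the KEP-action, $(G_B)_i$ the isotropy group at $i$.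 $E^0_{A,\infty}=\{i:(G_B)_i\text{ infinite}\}$, $E^0_{A,<\infty}$ its complement; $E_{A,\infty}$ is the subgraph with vertices $E^0_{A,\infty}$ and edges $\{e:s(e)\in E^0_{A,\infty},B_e\ne0\}$; $E_{A,<\infty}$ the subgraph with vertices $E^0_{A,<\infty}$ and edges $\{e:r(e)\in E^0_{A,<\infty},B_e\ne0\}$. Contracting: there is a finite $F\subseteq G_B$ such that for every $g$ there is $n$ with $g|_\mu\in F$ for all $\mu\in d(g)E^k$, $k\ge n$. Regular: for every $g$ there is $K$ such that $g\cdot\mu=\mu$ and $|\mu|\ge K$ imply $g|_\mu$ is the unit at $s(\mu)$. *)

(* Defs.v *)
From mathcomp Require Import all_boot all_order all_algebra.
Set Implicit Arguments. Unset Strict Implicit. Unset Printing Implicit Defensive.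
Import GRing.Theory Num.Theory.
Local Open Scope ring_scope.

(* Graph E_A: vertices 'I_N; an edge e_{i,j,m} is the triple (i, j, m),
   with r(e) = i, s(e) = j, and it is an edge iff m < A i j. *)
Definition edge (N : nat) := ('I_N * 'I_N * nat)%type.
Definition erng N (e : edge N) : 'I_N := e.1.1.
Definition esrc N (e : edge N) : 'I_N := e.1.2.
Definition eidx N (e : edge N) : nat := e.2.

Section KEP.
Variables (N : nat) (A : 'M[nat]_N) (B : 'M[int]_N).

Definition is_edge (e : edge N) : bool := (eidx e < A (erng e) (esrc e))%N.

(* [is_path_from v p]: p = mu_1 ... mu_n is a finite path of E_A with r(p) = v,
   i.e. p \in v E^*  (the empty path from v is the vertex v). *)
Fixpoint is_path_from (v : 'I_N) (p : seq (edge N)) : bool :=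
  match p with
  | [::] => true
  | e :: p' => [&& is_edge e, erng e == v & is_path_from (esrc e) p']
  end.

Definition psrc (v : 'I_N) (p : seq (edge N)) : 'I_N := last v (map (@esrc N) p).

Definition Apath (p : seq (edge N)) : nat := \prod_(e <- p) A (erng e) (esrc e).

(* The self-similar action of a_i^k on paths: returns (a_i^k . p, k') where
   a_i^k|_p = a_{s(p)}^{k'}.  One step: k B_ij + m = k' A_ij + m', 0 <= m' < A_ij. *)
Fixpoint kact (k : int) (p : seq (edge N)) : seq (edge N) * int :=
  match p with
  | [::] => ([::], k)
  | e :: p' =>
      let x := k * B (erng e) (esrc e) + (eidx e)%:Z in
      let a := (A (erng e) (esrc e))%:Z in
      let r := kact (x %/ a)%Z p' in
      ((erng e, esrc e, `|(x %% a)%Z|%N) :: r.1, r.2)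
  end.

(* Elements of G_B are represented by pairs (i, k) standing for the class of
   a_i^k in the faithful quotient; two representatives define the same element
   of G_B iff they have the same unit and act identically on all finite paths. *)
Definition GB_eq (g h : 'I_N * int) : Prop :=
  g.1 = h.1 /\ forall p, is_path_from g.1 p -> (kact g.2 p).1 = (kact h.2 p).1.

Definition GB_unit (v : 'I_N) (k : int) : Prop := GB_eq (v, k) (v, 0).

(* The isotropy group (G_B)_i = {[a_i^k] : k in Z} is infinite:
   it is not covered by finitely many classes. *)
Definition isotropy_infinite (i : 'I_N) : Prop :=
  ~ exists s : seq int, forall k : int, exists2 l, l \in s & GB_eq (i, k) (i, l).

Definition path_in_Einf (v : 'I_N) (p : seq (edge N)) : Prop :=
  is_path_from v p /\ isotropy_infinite v /\
  forall e, e \in p -> isotropy_infinite (esrc e) /\ B (erng e) (esrc e) <> 0.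

Definition path_in_Efin (v : 'I_N) (p : seq (edge N)) : Prop :=
  is_path_from v p /\ ~ isotropy_infinite v /\
  forall e, e \in p ->
    [/\ ~ isotropy_infinite (erng e), ~ isotropy_infinite (esrc e)
      & B (erng e) (esrc e) <> 0].

Definition contracting : Prop :=
  exists F : seq ('I_N * int),
    forall (v : 'I_N) (k : int), exists n : nat,
      forall p, is_path_from v p -> (n <= size p)%N ->
        exists2 h, h \in F & GB_eq (psrc v p, (kact k p).2) h.

Definition regular : Prop :=
  forall (v : 'I_N) (k : int), exists K : nat,
    forall p, is_path_from v p -> (kact k p).1 = p -> (K <= size p)%N ->
      GB_unit (psrc v p) (kact k p).2.

(* mu[K, |mu|] = mu_K ... mu_|mu| (1-based), i.e. drop the first K-1 edges. *)
Definition subpath_from (K : nat) (p : seq (edge N)) : seq (edge N) := drop K.-1 p.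

End KEP.

(* Main.v *)
Require Import Defs.
Set Warnings "-notation-overridden -ambiguous-paths".
From mathcomp Require Import all_boot all_order all_algebra.
From mathcomp Require Import zify.
From Stdlib Require Import Classical.
Set Implicit Arguments. Unset Strict Implicit. Unset Printing Implicit Defensive.
Import GRing.Theory Num.Theory.
Local Open Scope ring_scope.
Arguments erng {N} e /.
Arguments esrc {N} e /.
Arguments eidx {N} e /.
Section Proof.
Variables (N : nat) (A : 'M[nat]_N) (B : 'M[int]_N).
Hypothesis hB01 : forall i j, B i j = 0 \/ B i j = 1.

Local Notation inf := (isotropy_infinite A B).
Local Notation Ae e := (A (erng e) (esrc e)).
Local Notation Be e := (B (erng e) (esrc e)).
Local Notation path := (is_path_from A).
Local Notation ka := (kact A B).
Local Notation Bnz := (fun e : edge N => Be e != 0).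

Lemma kact_cat k (p q : seq (edge N)) : ka k (p ++ q) =
  ((ka k p).1 ++ (ka (ka k p).2 q).1, (ka (ka k p).2 q).2).
Proof.
elim: p k => [|e p IH] k /=; first by case: (ka k q).
by rewrite IH.
Qed.

Lemma size_kact k (p : seq (edge N)) : size (ka k p).1 = size p.
Proof. by elim: p k => [|e p IH] k //=; rewrite IH. Qed.

Lemma path_cat (v : 'I_N) (p q : seq (edge N)) : path v (p ++ q) = path v p && path (psrc v p) q.
Proof.
elim: p v => [|e p IH] v //=.
by rewrite IH !andbA.
Qed.

Lemma psrc_cat (v : 'I_N) (p q : seq (edge N)) : psrc v (p ++ q) = psrc (psrc v p) q.
Proof. by rewrite /psrc map_cat last_cat. Qed.

Lemma psrc_cons (v : 'I_N) e (p : seq (edge N)) : psrc v (e :: p) = psrc (esrc e) p.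
Proof. by []. Qed.

Lemma Bone i j : B i j != 0 -> B i j = 1.
Proof. by case: (hB01 i j) => ->. Qed.

Lemma edge_pos e : is_edge A e -> (0 < Ae e)%N.
Proof. rewrite /is_edge; lia. Qed.

Lemma kact0 v p : path v p -> ka 0 p = (p, 0).
Proof.
elim: p v => [|[[r s] m] p IH] v //= /and3P [he _ hp].
rewrite /is_edge /= in he.
rewrite mul0r add0r.
have h0 : (0 <= m%:Z < (A r s)%:Z) by lia.
rewrite modz_small // divz_small //.
by rewrite (IH _ hp).
Qed.

Lemma kact_B0 v p k : path v p -> has (fun e => Be e == 0) p -> (ka k p).2 = 0.
Proof.
elim: p v k => [|[[r s] m] p IH] v k //= /and3P [he _ hp].
rewrite /is_edge /= in he.
case/orP => [/eqP hb|hh]; last exact: (IH _ _ hp hh).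
rewrite /erng /esrc /= in hb *.
rewrite hb mulr0 add0r divz_small; last by rewrite abszE /=; lia.
by rewrite (kact0 hp).
Qed.

Lemma step_le k (a m : nat) (b : int) : (m < a)%N -> (b = 0 \/ b = 1) ->
  (absz ((k * b + m%:Z) %/ a%:Z)%Z <= absz k)%N.
Proof.
move=> hm [->|->].
  rewrite mulr0 add0r divz_small; last by rewrite abszE /=; lia.
  by [].
rewrite mulr1.
have ha : (0 < a%:Z) by lia.
have := divz_eq (k + m%:Z) a%:Z. have := ltz_pmod (k + m%:Z) ha.
have := modz_ge0 (k + m%:Z) (_ : a%:Z != 0).
set q := (_ %/ _)%Z. set r := (_ %% _)%Z. nia.
Qed.

Lemma step_lt k (a m : nat) : (2 <= a)%N -> (m < a)%N -> (2 <= absz k)%N ->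
  (absz ((k * 1 + m%:Z) %/ a%:Z)%Z < absz k)%N.
Proof.
move=> h1 h2 h3. rewrite mulr1.
have ha : (0 < a%:Z) by lia.
have := divz_eq (k + m%:Z) a%:Z. have := ltz_pmod (k + m%:Z) ha.
have := modz_ge0 (k + m%:Z) (_ : a%:Z != 0).
set q := (_ %/ _)%Z. set r := (_ %% _)%Z. nia.
Qed.

Lemma kact_mono v p k : path v p -> (absz (ka k p).2 <= absz k)%N.
Proof.
elim: p v k => [|[[r s] m] p IH] v k //= /and3P [he _ hp].
rewrite /is_edge /= in he.
apply: leq_trans (IH _ _ hp) _.
exact: step_le.
Qed.


Lemma Apath_cons e (p : seq (edge N)) : Apath A (e :: p) = (Ae e * Apath A p)%N.
Proof. by rewrite /Apath big_cons. Qed.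

Lemma Apath_cat (p q : seq (edge N)) : Apath A (p ++ q) = (Apath A p * Apath A q)%N.
Proof. by rewrite /Apath big_cat. Qed.

Definition AllA1 (w : 'I_N) := forall s, path w s -> all Bnz s -> Apath A s = 1%N.

Lemma AllA1_unit w c : AllA1 w -> GB_unit A B w c.
Proof.
rewrite /GB_unit /GB_eq /=; move=> hA; split=> // p hp.
rewrite (kact0 hp) /=.
elim: p w c hA hp => [|[[r s] m] p IH] w c hA //= /and3P [he /eqP hr hp].
rewrite /is_edge /= in he hr hp *. subst w.
case: (hB01 r s) => hb.
  rewrite hb mulr0 add0r divz_small; last by lia.
  rewrite (kact0 hp) modz_small //; lia.
have h1 : A r s = 1%N.
  have := hA [:: (r, s, m)]; rewrite /= /is_edge /= he eqxx hb /= => /(_ isT isT).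
  by rewrite Apath_cons /Apath big_nil muln1.
have hm : m = 0%N by lia.
subst m. rewrite hb h1 mulr1 addr0 divz1 modz1 /=.
rewrite (IH s c) //.
move=> t ht hall; have := hA ((r, s, 0%N) :: t).
rewrite /= /is_edge /= h1 eqxx ht hb /= => /(_ isT hall).
by rewrite Apath_cons /= h1 mul1n.
Qed.

Lemma kact_fix1 v (p : seq (edge N)) k : path v p -> all Bnz p -> Apath A p = 1%N ->
  ka k p = (p, k).
Proof.
elim: p v k => [|[[r s] m] p IH] v k //= /and3P [he _ hp] /andP [hb hall].
rewrite Apath_cons /= => /eqP; rewrite muln_eq1 => /andP [/eqP h1 /eqP hA].
rewrite /is_edge /= in he hb. rewrite (Bone hb) /= h1 in he *.
have hm : m = 0%N by lia.
subst m. rewrite mulr1 addr0 divz1 modz1 /=.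
by rewrite (IH _ _ hp hall hA).
Qed.

Lemma kact_div v (p : seq (edge N)) k : path v p -> all Bnz p -> (ka k p).1 = p ->
  k = (Apath A p)%:Z * (ka k p).2.
Proof.
elim: p v k => [|[[r s] m] p IH] v k /=; first by rewrite /Apath big_nil mul1r.
move=> /and3P [he _ hp] /andP [hb hall] [hm hrest].
rewrite /is_edge /= in he hb. rewrite (Bone hb) mulr1 in hm hrest *.
have hq := IH _ _ hp hall hrest.
rewrite Apath_cons PoszM -mulrA -hq.
have := divz_eq (k + m%:Z) (A r s)%:Z.
have : ((k + m%:Z) %% (A r s)%:Z)%Z = m%:Z.
  have : (0 <= ((k + m%:Z) %% (A r s)%:Z)%Z) by apply: modz_ge0; lia.
  move: hm. set x := (_ %% _)%Z. lia.
move=> -> /=. nia.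
Qed.

Lemma kact_mul v (p : seq (edge N)) c : path v p -> all Bnz p ->
  ka ((Apath A p)%:Z * c) p = (p, c).
Proof.
elim: p v c => [|[[r s] m] p IH] v c /=; first by rewrite /Apath big_nil mul1r.
move=> /and3P [he _ hp] /andP [hb hall].
rewrite /is_edge /= in he hb. rewrite (Bone hb) mulr1 Apath_cons PoszM /=.
have hA : (A r s)%:Z != 0 by lia.
have e1 : ((((A r s)%:Z * (Apath A p)%:Z) * c + m%:Z) %/ (A r s)%:Z)%Z = (Apath A p)%:Z * c.
  rewrite -mulrA (mulrC (A r s)%:Z) divzMDl // divz_small ?addr0 //; lia.
have e2 : ((((A r s)%:Z * (Apath A p)%:Z) * c + m%:Z) %% (A r s)%:Z)%Z = m%:Z.
  rewrite -mulrA (mulrC (A r s)%:Z) modzMDl modz_small //; lia.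
by rewrite e1 e2 (IH _ _ hp hall).
Qed.


Lemma fin_src e : is_edge A e -> Be e != 0 -> ~ inf (erng e) -> ~ inf (esrc e).
Proof.
case: e => [[r s] m] /=; rewrite /is_edge /= => he hb hfin hinf.
apply: hfin => -[S hS]; apply: hinf.
exists [seq (l %/ (A r s)%:Z)%Z | l <- S] => c.
have [l hl heq] := hS (c * (A r s)%:Z).
exists (l %/ (A r s)%:Z)%Z; first exact: map_f.
split=> //= t ht.
have := heq.2 ((r, s, 0%N) :: t).
rewrite /= /is_edge /= eqxx ht andbT.
have -> : (0 < A r s)%N by lia.
move=> /(_ isT) [_].
rewrite (Bone hb) !mulr1 !addr0 mulzK //; lia.
Qed.


Lemma efin_of u (p : seq (edge N)) : ~ inf u -> path u p -> all Bnz p -> path_in_Efin A B u p.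
Proof.
elim: p u => [|e p IH] u hu; first by move=> _ _; split=> //; split.
move=> /= /and3P [he /eqP hr hp] /andP [hb hall].
have hs : ~ inf (esrc e) by apply: fin_src => //; move: hu; rewrite -hr.
have [_ [_ H]] := IH _ hs hp hall.
split; first by rewrite /= he hr eqxx hp.
split=> // x; rewrite inE => /orP [/eqP ->|hx]; last exact: H.
by split; [move: hu; rewrite -hr | | apply/eqP].
Qed.

Lemma efin_prefix u (p q : seq (edge N)) : path_in_Efin A B u (p ++ q) -> path_in_Efin A B u p.
Proof.
move=> [hp [hu H]]; split; first by move: hp; rewrite path_cat => /andP [].
by split=> // x hx; apply: H; rewrite mem_cat hx.
Qed.

Lemma einf_prefix u (p q : seq (edge N)) : path_in_Einf A B u (p ++ q) -> path_in_Einf A B u p.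
Proof.
move=> [hp [hu H]]; split; first by move: hp; rewrite path_cat => /andP [].
by split=> // x hx; apply: H; rewrite mem_cat hx.
Qed.

Lemma einf_cons u e (p : seq (edge N)) : path_in_Einf A B u (e :: p) ->
  [/\ path_in_Einf A B (esrc e) p, is_edge A e, erng e = u & Be e != 0].
Proof.
move=> [/= /and3P [he /eqP hr hp] [hu H]].
have [hs hb] := H e (mem_head _ _).
split=> //; last by apply/eqP.
split=> //; split=> // x hx; apply: H; by rewrite inE hx orbT.
Qed.

Lemma einf_psrc u (p : seq (edge N)) : path_in_Einf A B u p -> inf (psrc u p).
Proof.
elim: p u => [|e p IH] u; first by move=> [_ []].
by move=> /einf_cons [h _ _ _]; rewrite psrc_cons; apply: IH.
Qed.

Lemma einf_suffix u (p q : seq (edge N)) : path_in_Einf A B u (p ++ q) ->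
  path_in_Einf A B (psrc u p) q.
Proof.
elim: p u => [|e p IH] u //= /einf_cons [h _ _ _].
by rewrite psrc_cons; apply: IH.
Qed.

Lemma einf_Bnz u (p : seq (edge N)) : path_in_Einf A B u p -> all Bnz p.
Proof.
move=> [_ [_ H]]; apply/allP => x hx; have [_ hb] := H x hx; exact/eqP.
Qed.

Lemma split_path v (p : seq (edge N)) : path v p -> all Bnz p ->
  ~ inf v \/ path_in_Einf A B v p \/
  exists p1 f p2, p = p1 ++ f :: p2 /\ path_in_Einf A B v p1 /\ ~ inf (esrc f).
Proof.
elim: p v => [|e p IH] v hp hb.
  case: (classic (inf v)) => hv; last by left.
  by right; left; split=> //; split.
case: (classic (inf v)) => hv; last by left.
right.
move: hp hb => /= /and3P [he /eqP hr hp] /andP [hbe hall].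
have hv0 : path_in_Einf A B v [::] by split=> //; split.
case: (classic (inf (esrc e))) => hs; last first.
  by right; exists [::], e, p.
case: (IH _ hp hall) => [//|[hI|[p1 [f [p2 [-> [hI hf]]]]]]].
  left; split; first by rewrite /= he hr eqxx hp.
  split=> // x; rewrite inE => /orP [/eqP ->|hx]; first by split=> //; apply/eqP.
  by case: hI => _ [_ H]; apply: H.
right; exists (e :: p1), f, p2; split=> //; split=> //.
split; first by rewrite /= he hr eqxx; case: hI.
split=> // x; rewrite inE => /orP [/eqP ->|hx]; first by split=> //; apply/eqP.
by case: hI => _ [_ H]; apply: H.
Qed.

Lemma fin_AllA1 K
  (hii : forall v p, path_in_Efin A B v p -> (K <= size p)%N -> Apath A (subpath_from K p) = 1%N)
  u p : ~ inf u -> path u p -> all Bnz p -> (K.-1 <= size p)%N -> AllA1 (psrc u p).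
Proof.
move=> hu hp hb hK s hs hbs.
have hE : path_in_Efin A B u (p ++ s) by apply: efin_of; rewrite ?path_cat ?all_cat ?hp ?hs ?hb.
case: s hs hbs hE => [|e s] hs hbs hE; first by rewrite /Apath big_nil.
have := hii _ _ hE; rewrite size_cat /= => /(_ ltac:(lia)).
rewrite /subpath_from drop_cat.
case: ltnP => h.
  by rewrite Apath_cat => /eqP; rewrite muln_eq1 => /andP [_ /eqP].
by have -> : (K.-1 - size p = 0)%N by lia.
Qed.


Lemma Apath_nil : Apath A [::] = 1%N.
Proof. by rewrite /Apath big_nil. Qed.

Section WithK.
Variable K : nat.
Hypothesis hi : forall v p, path_in_Einf A B v p -> Apath A p = 1%N -> (size p <= K)%N.

Lemma einf_size (p : seq (edge N)) : forall q w, path_in_Einf A B w (q ++ p) ->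
  Apath A q = 1%N -> (size q + size p < (K + 1) * Apath A p)%N.
Proof.
elim: p => [|[[r s] m] p IH] q w H hq.
  rewrite cats0 in H; have := hi H hq; rewrite /Apath big_nil /=; lia.
have hE := einf_suffix H.
have [hE' he hr hb] := einf_cons hE.
rewrite /is_edge /= in he hE' hb.
rewrite Apath_cons /=.
have [h1|h2] : (A r s = 1)%N \/ (2 <= A r s)%N by lia.
  have H' : path_in_Einf A B w (rcons q (r, s, m) ++ p) by rewrite cat_rcons.
  have := IH _ _ H'; rewrite -cats1 Apath_cat Apath_cons /= h1 hq /Apath big_nil size_cat /=.
  move=> /(_ erefl); lia.
have hq' := hi (einf_prefix H) hq.
have := IH [::] s hE' Apath_nil; rewrite /=.
move=> hX.
have hY : ((K + 1) * (A r s * Apath A p) = A r s * ((K + 1) * Apath A p))%N by rewrite mulnCA.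
have h2Y : (2 * ((K + 1) * Apath A p) <= A r s * ((K + 1) * Apath A p))%N by apply: leq_mul.
have hAp : (0 < Apath A p)%N by move: hX; case: (Apath A p) => //; rewrite muln0.
have hKY : (K + 1 <= (K + 1) * Apath A p)%N by rewrite leq_pmulr.
rewrite hY; move: hX h2Y hKY.
move: (A r s * ((K + 1) * Apath A p))%N => Z.
move: ((K + 1) * Apath A p)%N => Y.
lia.
Qed.

Lemma einf_contract (p : seq (edge N)) : forall q w k, path_in_Einf A B w (q ++ p) ->
  Apath A q = 1%N -> ((K + 1) * absz k <= size q + size p)%N -> (absz (ka k p).2 <= 1)%N.
Proof.
elim: p => [|[[r s] m] p IH] q w k H hq hk.
  rewrite cats0 in H; have := hi H hq; move: hk; rewrite /= addn0.
  move: (absz k) => n; case: n => [|n] //=; lia.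
have hE := einf_suffix H.
have [hE' he hr hb] := einf_cons hE.
rewrite /is_edge /= in he hE' hb *.
rewrite (Bone hb).
have [h1|h2] : (A r s = 1)%N \/ (2 <= A r s)%N by lia.
  have hm : m = 0%N by lia.
  subst m. rewrite h1 mulr1 addr0 divz1.
  have H' : path_in_Einf A B w (rcons q (r, s, 0%N) ++ p) by rewrite cat_rcons.
  apply: (IH _ _ _ H'); first by rewrite -cats1 Apath_cat Apath_cons /= h1 hq /Apath big_nil.
  rewrite size_rcons /=; move: hk; rewrite /=; lia.
have hq' := hi (einf_prefix H) hq.
have [hk1|hk2] : (absz k <= 1)%N \/ (2 <= absz k)%N by lia.
  apply: leq_trans (kact_mono _ hE'.1) _.
  by apply: leq_trans (step_le k he (or_intror erefl)) _.
have hlt := step_lt h2 he hk2.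
apply: (IH [::] s _ hE' Apath_nil).
move: hk; rewrite /=; nia.
Qed.



Hypothesis hii : forall v p, path_in_Efin A B v p -> (K <= size p)%N ->
  Apath A (subpath_from K p) = 1%N.

Lemma fixed_bound v (p : seq (edge N)) k : path_in_Einf A B v p -> (ka k p).1 = p -> k != 0 ->
  (size p < (K + 1) * absz k)%N.
Proof.
move=> hI hfix hk.
have := einf_size (q := [::]) hI Apath_nil; rewrite /= => hs.
have := kact_div hI.1 (einf_Bnz hI) hfix.
move: ((ka k p).2) => c hkc.
have hc : c != 0 by apply: contraNneq hk => hc; rewrite hkc hc mulr0.
have : (Apath A p <= absz k)%N.
  rewrite hkc abszM /=. rewrite -{1}(muln1 (Apath A p)) leq_mul2l absz_gt0 hc orbT //.
move=> hA; apply: (leq_trans hs); by rewrite leq_mul2l hA orbT.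
Qed.

Lemma unit0 w : GB_unit A B w 0.
Proof. by split. Qed.

Lemma B0_case v (p : seq (edge N)) k : path v p -> ~~ all Bnz p -> (ka k p).2 = 0.
Proof.
move=> hp hall; apply: (@kact_B0 v p k hp).
rewrite -has_predC in hall; apply: sub_has hall => e /= /negPn /eqP ->.
by [].
Qed.

Lemma reg_of_iii : regular A B.
Proof.
move=> v k; exists ((K + 1) * absz k + K + 1)%N => p hp hfix hsz.
case: (boolP (all Bnz p)) => hall; last by rewrite (B0_case k hp hall); apply: unit0.
case: (eqVneq k 0) => [->|hk]; first by rewrite (kact0 hp); apply: unit0.
case: (split_path hp hall) => [hv|[hI|[p1 [f [p2 [hpe [hI hf]]]]]]].
- apply: AllA1_unit; apply: (fin_AllA1 hii hv hp hall); lia.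
- have := fixed_bound hI hfix hk; lia.
- subst p.
  have hfix1 : (ka k p1).1 = p1.
    move: hfix; rewrite kact_cat => /eqP; rewrite eqseq_cat ?size_kact //.
    by case/andP => /eqP.
  have := fixed_bound hI hfix1 hk => hs1.
  move: hp hall; rewrite path_cat all_cat => /andP [hp1 /= /and3P [he _ hp2]] /andP [_ /andP [_ hall2]].
  rewrite psrc_cat psrc_cons.
  apply: AllA1_unit; apply: (fin_AllA1 hii hf hp2 hall2).
  move: hsz; rewrite size_cat /=; lia.
Qed.

Lemma contr_of_iii : contracting A B.
Proof.
exists [seq (u, c) | u <- enum 'I_N, c <- [:: -1; 0; 1]] => v k.
exists ((K + 1) * absz k + K + 1)%N => p hp hsz.
have hmem : forall u c, (absz c <= 1)%N ->
    (u, c) \in [seq (u, c) | u <- enum 'I_N, c <- [:: -1; 0; 1]].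
  move=> u c hc; apply/allpairsP; exists (u, c) => /=; split => //; first by rewrite mem_enum.
  rewrite !inE; move: hc; move: c => [[|[|n]]|[|n]] //=.
have hF : forall u c, (absz c <= 1)%N ->
    exists2 h, h \in [seq (u, c) | u <- enum 'I_N, c <- [:: -1; 0; 1]] & GB_eq A B (u, c) h.
  by move=> u c hc; exists (u, c); [apply: hmem | split].
have hF0 : forall u c, AllA1 u ->
    exists2 h, h \in [seq (u, c) | u <- enum 'I_N, c <- [:: -1; 0; 1]] & GB_eq A B (u, c) h.
  move=> u c hu; exists (u, 0); first exact: hmem.
  by have [_ H] := AllA1_unit c hu; split=> // t ht; rewrite H.
case: (boolP (all Bnz p)) => hall; last by apply: hF; rewrite (B0_case k hp hall).
case: (split_path hp hall) => [hv|[hI|[p1 [f [p2 [hpe [hI hf]]]]]]].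
- apply: hF0; apply: (fin_AllA1 hii hv hp hall); lia.
- apply: hF; apply: (einf_contract (q := [::]) hI Apath_nil) => /=; lia.
- subst p.
  move: hp hall; rewrite path_cat all_cat => /andP [hp1 /= /and3P [he _ hp2]] /andP [_ /andP [_ hall2]].
  have [hs1|hs1] : ((K + 1) * absz k <= size p1)%N \/ (size p1 < (K + 1) * absz k)%N by lia.
    apply: hF; rewrite kact_cat /=.
    have h1 := einf_contract (q := [::]) hI Apath_nil hs1.
    apply: leq_trans (kact_mono _ hp2) _.
    apply: leq_trans _ h1.
    rewrite /is_edge in he.
    by apply: step_le.
  rewrite psrc_cat psrc_cons.
  apply: hF0; apply: (fin_AllA1 hii hf hp2 hall2).
  move: hsz; rewrite size_cat /=; lia.
Qed.

End WithK.


Lemma unif_seq (T : eqType) (P : T -> nat -> Prop) (s : seq T) :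
  (forall x K K', (K <= K')%N -> P x K -> P x K') ->
  (forall x, x \in s -> exists K, P x K) -> exists K, forall x, x \in s -> P x K.
Proof.
move=> hm; elim: s => [|x s IH] H; first by exists 0%N.
have [Kx hx] := H x (mem_head _ _).
have [Ks hs] : exists K, forall y, y \in s -> P y K.
  by apply: IH => y hy; apply: H; rewrite inE hy orbT.
exists (maxn Kx Ks) => y; rewrite inE => /orP [/eqP ->|hy].
  by apply: hm hx; rewrite leq_maxl.
by apply: hm (hs y hy); rewrite leq_maxr.
Qed.

Lemma unif_fin (T : finType) (P : T -> nat -> Prop) :
  (forall x K K', (K <= K')%N -> P x K -> P x K') ->
  (forall x, exists K, P x K) -> exists K, forall x, P x K.
Proof.
move=> hm H; have [K HK] := @unif_seq T P (enum T) hm (fun x _ => H x).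
by exists K => x; apply: HK; rewrite mem_enum.
Qed.

Lemma not_unit_of_inf w : inf w -> exists k, ~ GB_unit A B w k.
Proof.
move=> hw; apply: NNPP => hn; apply: hw; exists [:: 0] => k.
exists 0; first by rewrite inE.
by apply: NNPP => hu; apply: hn; exists k.
Qed.

Lemma iii_of_reg : regular A B -> exists K : nat,
     (forall (v : 'I_N) (p : seq (edge N)),
        path_in_Einf A B v p -> Apath A p = 1%N -> (size p <= K)%N) /\
     (forall (v : 'I_N) (p : seq (edge N)),
        path_in_Efin A B v p -> (K <= size p)%N ->
        Apath A (subpath_from K p) = 1%N).
Proof.
move=> hreg.
have [K1 HK1] : exists K, forall vw : 'I_N * 'I_N, forall p, path_in_Einf A B vw.1 p ->
    Apath A p = 1%N -> psrc vw.1 p = vw.2 -> (size p <= K)%N.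
  apply: unif_fin; first by move=> x K K' hK H p h1 h2 h3; apply: leq_trans hK; apply: H.
  move=> [v w] /=.
  case: (classic (inf w)) => hw; last first.
    by exists 0%N => p hI _ hpw; exfalso; apply: hw; rewrite -hpw; apply: einf_psrc.
  have [k0 hk0] := not_unit_of_inf hw.
  have [K0 hK0] := hreg v k0.
  exists K0 => p hI hA hpw; rewrite leqNgt; apply/negP => hlt; apply: hk0.
  have hfix := kact_fix1 k0 hI.1 (einf_Bnz hI) hA.
  have := hK0 p hI.1; rewrite hfix /= hpw; apply=> //; exact: ltnW.
have [K2 HK2] : exists K, forall v : 'I_N, forall q (f : edge N),
    path_in_Efin A B v (q ++ [:: f]) -> (K <= size q)%N -> Ae f = 1%N.
  apply: unif_fin; first by move=> x K K' hK H q f h1 h2; apply: H h1 _; apply: leq_trans h2.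
  move=> v.
  case: (classic (inf v)) => hv.
    by exists 0%N => q f [_ [hv' _]].
  have [S hS] : exists S : seq int, forall k : int, exists2 l, l \in S & GB_eq A B (v, k) (v, l).
    by apply: NNPP.
  have [K2 HK2] := @unif_seq _ (fun l K => forall p, path v p -> (ka l p).1 = p ->
      (K <= size p)%N -> GB_unit A B (psrc v p) (ka l p).2) S
    (fun x K K' hK H p h1 h2 h3 => H p h1 h2 (leq_trans hK h3))
    (fun l _ => hreg v l).
  exists K2 => q [[r s] m] hE hq /=.
  case: hE => hp [_ hE].
  move: hp; rewrite path_cat => /andP [hpq /= /and3P [he /eqP hr _]].
  rewrite /is_edge /= in he hr.
  have hallq : all Bnz q.
    apply/allP => e he'; have := hE e; rewrite mem_cat he' => /(_ isT) [_ _ hb]; exact/eqP.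
  have := hE (r, s, m); rewrite mem_cat mem_seq1 eqxx orbT => /(_ isT) [_ _ hbf].
  have hb1 : B r s = 1 by apply: Bone; apply/eqP.
  apply/eqP; apply: contraT => hA1.
  have h2 : (2 <= A r s)%N by move: hA1 he; lia.
  have [l hl heq] := hS ((Apath A q)%:Z).
  have hfixa : ka (Apath A q)%:Z q = (q, 1) by have := kact_mul 1 hpq hallq; rewrite mulr1.
  have hfixl : (ka l q).1 = q by rewrite -(heq.2 q hpq) hfixa.
  have hu := HK2 l hl q hpq hfixl hq.
  have hp0 : path v (q ++ [:: (r, s, 0%N)]).
    rewrite path_cat hpq /= /is_edge /= -hr eqxx !andbT; lia.
  have hp0' : path (psrc v q) [:: (r, s, 0%N)].
    by move: hp0; rewrite path_cat => /andP [].
  have := heq.2 _ hp0; rewrite [X in X -> _]/= !kact_cat hfixa hfixl.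
  move/eqP; rewrite eqseq_cat // => /andP [_ /eqP].
  rewrite (hu.2 _ hp0') (kact0 hp0') /= hb1 mul1r addr0 modz_small; last by lia.
  by case.
have hK2' : forall r q, forall v, path_in_Efin A B v (q ++ r) -> (K2 <= size q)%N -> Apath A r = 1%N.
  elim=> [|f r IH] q v hE hq; first exact: Apath_nil.
  rewrite Apath_cons (HK2 v q f) ?mul1n //; last by apply: (@efin_prefix v (q ++ [:: f]) r); rewrite -catA.
  by apply: (IH (rcons q f) v); [rewrite cat_rcons | rewrite size_rcons; lia].
exists (maxn K1 K2.+1); split.
  move=> v p hI hA; apply: leq_trans (HK1 (v, psrc v p) p hI hA erefl) _.
  exact: leq_maxl.
move=> v p hE hK.
rewrite /subpath_from; apply: (hK2' _ (take (maxn K1 K2.+1).-1 p) v); first by rewrite cat_take_drop.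
rewrite size_take; case: ltnP; lia.
Qed.

End Proof.

Unset Implicit Arguments.

Theorem corollary3p4 (N : nat) (A : 'M[nat]_N) (B : 'M[int]_N)
  (hKatsura : forall i j, A i j = 0%N -> B i j = 0)
  (hB01 : forall i j, B i j = 0 \/ B i j = 1) :
  (regular A B -> contracting A B) /\
  (regular A B <->
   exists K : nat,
     (forall (v : 'I_N) (p : seq (edge N)),
        path_in_Einf A B v p -> Apath A p = 1%N -> (size p <= K)%N) /\
     (forall (v : 'I_N) (p : seq (edge N)),
        path_in_Efin A B v p -> (K <= size p)%N ->
        Apath A (subpath_from K p) = 1%N)).
Proof.
split.
  move=> /(iii_of_reg hB01) [K [hi hii]]; exact: (contr_of_iii hB01 hi hii).
split; first exact: (iii_of_reg hB01).
move=> [K [hi hii]]; exact: (reg_of_iii hB01 hi hii).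
Qed.
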